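(* Let $C$ be a free abelian group with basis $\{c_i\mid i\in\mathbb{Z}\}$, so each $x\in C$ is uniquely $x=\sum_{i\in\mathbb{Z}}x_ic_i$ with finitely many nonzero $x_i\in\mathbb{Z}$. For $x,y\in C$ with $y=\sum_i y_ic_i$, define \[\lambda_x(y)=\sum_{i\in\mathbb{Z}}y_i\,c_{i+\sum_{j\in\mathbb{Z}}x_j},\] and define $xy=x+\lambda_x(y)$. Then $(C,+,\cdot)$ is a left brace with $C^{(3)}=\{0\}$, it is generated (as a left brace) by $c_0$, and $C^j\neq\{0\}$ for all $j\in\mathbb{N}$. Moreover, if $A$ is any left brace with $A^{(3)}=\{0\}$ and $b\in A$, there exists a unique left brace epimorphism $\alpha$ from $C$ onto the subbrace of $A$ generated by $b$ with $\alpha(c_0)=b$.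
   Context: A left brace $(A,+,\cdot)$ is a set $A$ with two binary operations such that $(A,+)$ is an abelian group, $(A,\cdot)$ is a group, and $a(b+c)=ab-a+ac$ for all $a,b,c\in A$. In a left brace, $a*b=-a+ab-b$. For subsets $L,M\subseteq A$, $L*M$ is the subgroup of $(A,+)$ generated by $\{l*m\mid l\in L,m\in M\}$. Set $A^{(1)}=A$, $A^{(r+1)}=A^{(r)}*A$, and $A^1=A$, $A^{r+1}=A*A^r$ for $r\ge1$. A subbrace is a subset that is a subgroup of both $(A,+)$ and $(A,\cdot)$; the subbrace generated by an element is the intersection of all subbraces containing it. A left brace homomorphism is a map that is a homomorphism for both operations. *)

(* Defs.v *)
From HB Require Import structures.
From mathcomp Require Import all_boot all_order all_algebra.
From mathcomp Require Import freeg.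
Set Implicit Arguments. Unset Strict Implicit. Unset Printing Implicit Defensive.
Import GRing.Theory.
Local Open Scope ring_scope.

Section Brace.
Variables (V : zmodType) (mul : V -> V -> V).

Definition is_mul_identity (e : V) : Prop :=
  forall a, mul e a = a /\ mul a e = a.

Definition is_mul_group : Prop :=
  (forall a b c, mul a (mul b c) = mul (mul a b) c) /\
  exists e, is_mul_identity e /\ forall a, exists a', mul a a' = e /\ mul a' a = e.

Definition is_left_brace : Prop :=
  is_mul_group /\ forall a b c, mul a (b + c) = mul a b - a + mul a c.

Definition bstar (a b : V) : V := - a + mul a b - b.

Definition add_subgroup (S : V -> Prop) : Prop :=
  S 0 /\ (forall x y, S x -> S y -> S (x - y)).

Definition mul_subgroup (S : V -> Prop) : Prop :=
  (forall e, is_mul_identity e -> S e) /\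
  (forall x y, S x -> S y -> S (mul x y)) /\
  (forall x x' e, is_mul_identity e -> S x -> mul x x' = e -> S x').

Definition subbrace (S : V -> Prop) : Prop := add_subgroup S /\ mul_subgroup S.

Definition star_set (L M : V -> Prop) : V -> Prop :=
  fun z => forall H, add_subgroup H ->
    (forall l m, L l -> M m -> H (bstar l m)) -> H z.

Definition setT_ : V -> Prop := fun _ => True.

(* bder n = A^(n) for n >= 1 : A^(1) = A, A^(r+1) = A^(r) * A
   (bder 0 is set to A by convention and never used) *)
Fixpoint bder (n : nat) : V -> Prop :=
  match n with
  | 0 => setT_
  | 1 => setT_
  | S ((S _) as k) => star_set (bder k) setT_
  end.

(* bpow n = A^n for n >= 1 : A^1 = A, A^(r+1) = A * A^r *)
Fixpoint bpow (n : nat) : V -> Prop :=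
  match n with
  | 0 => setT_
  | 1 => setT_
  | S ((S _) as k) => star_set setT_ (bpow k)
  end.

Definition subbrace_gen (b : V) : V -> Prop :=
  fun x => forall S, subbrace S -> S b -> S x.

Definition is_zero_set (S : V -> Prop) : Prop := forall x, S x <-> x = 0.

End Brace.

Definition brace_hom (V W : zmodType) (mulV : V -> V -> V) (mulW : W -> W -> W)
  (f : V -> W) : Prop :=
  (forall x y, f (x + y) = f x + f y) /\ (forall x y, f (mulV x y) = mulW (f x) (f y)).

Definition C := {freeg int / int}.
Definition c (i : int) : C := << i >>.

(* lambda_x(y) = sum_i y_i c_{i + sum_j x_j} ; deg x = sum_j x_j *)
Definition clambda (x y : C) : C :=
  \sum_(i <- dom y) << coeff i y *g (i + deg x) >>.

Definition cmul (x y : C) : C := x + clambda x y.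

(* Main.v *)
Require Import Defs.
From HB Require Import structures.
From mathcomp Require Import all_boot all_order all_algebra.
From mathcomp Require Import freeg zify.
Import GRing.Theory.
Local Open Scope ring_scope.

Definition zlift (M : zmodType) (f : int -> M) (x : C) : M := @fglift int (zmodule M) int f x.
Arguments zlift {M} f x.
HB.instance Definition _ (M : zmodType) (f : int -> M) :=
  GRing.isZmodMorphism.Build C M (zlift f) (@lift_is_additive _ _ (zmodule M) f).

Lemma zliftU (M : zmodType) (f : int -> M) k i : zlift f << k *g i >> = f i *~ k.
Proof. by rewrite /zlift liftU. Qed.

Lemma zliftc (M : zmodType) (f : int -> M) i : zlift f (c i) = f i.
Proof. by rewrite /c zliftU. Qed.

Lemma cU k i : << k *g i >> = c i *~ k.
Proof. by rewrite /c freegU_mulz intz. Qed.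

Lemma C_ind (P : C -> Prop) : P 0 -> (forall x y, P x -> P y -> P (x + y)) ->
  (forall x, P x -> P (- x)) -> (forall i, P (c i)) -> forall x, P x.
Proof.
move=> P0 PD PN Pc x; rewrite -(freeg_sumE x).
elim: (dom x) => [|i s IH]; first by rewrite big_nil.
rewrite big_cons; apply: (PD) => //; rewrite cU.
have Pn : forall n : nat, P (c i *+ n).
  by elim=> [|n IHn]; rewrite ?mulr0n // mulrS; apply: (PD).
case: (coeff i x) => n; first exact: Pn.
by rewrite NegzE mulrNz; apply: PN; apply: Pn.
Qed.

Lemma int_ind2 (P : int -> Prop) : P 0 -> (forall i, P i -> P (1 + i)) ->
  (forall i, P i -> P (-1 + i)) -> forall i, P i.
Proof.
move=> P0 Pu Pd; case=> n.
  elim: n => // n IH; have := Pu _ IH; congr P; rewrite -[n.+1]addn1 PoszD addrC //.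
elim: n => [|n IH]; first by have := Pd _ P0; rewrite addr0.
by have := Pd _ IH; congr P; rewrite !NegzE; lia.
Qed.

Notation shf d := (zlift (fun i => c (i + d))).

Lemma clambda_shf x y : clambda x y = shf (deg x) y.
Proof.
rewrite /clambda; transitivity (shf (deg x) (\sum_(i <- dom y) << coeff i y *g i >>)).
  by rewrite raddf_sum; apply: eq_bigr => i _ /=; rewrite zliftU cU.
by rewrite freeg_sumE.
Qed.

Lemma deg_c i : deg (c i) = 1.
Proof. exact: degU. Qed.

Lemma deg_shf d y : deg (shf d y) = deg y.
Proof.
elim/C_ind: y => [|x y Hx Hy|x Hx|i] /=; rewrite ?raddf0 ?raddfD ?raddfN /= ?Hx ?Hy //.
by rewrite zliftc !deg_c.
Qed.

Lemma shf0 y : shf 0 y = y.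
Proof.
elim/C_ind: y => [|x y Hx Hy|x Hx|i] /=; rewrite ?raddf0 ?raddfD ?raddfN /= ?Hx ?Hy //.
by rewrite zliftc addr0.
Qed.

Lemma shf_shf a b y : shf a (shf b y) = shf (b + a) y.
Proof.
elim/C_ind: y => [|x y Hx Hy|x Hx|i] /=; rewrite ?raddf0 ?raddfD ?raddfN /= ?Hx ?Hy //.
by rewrite !zliftc addrA.
Qed.

Lemma cmulE x y : cmul x y = x + shf (deg x) y.
Proof. by rewrite /cmul clambda_shf. Qed.

Lemma deg_cmul x y : deg (cmul x y) = deg x + deg y.
Proof. by rewrite cmulE raddfD /= deg_shf. Qed.

Lemma C_brace : is_left_brace cmul.
Proof.
rewrite /is_left_brace /is_mul_group.
split; last first.
  move=> a b d; rewrite !cmulE raddfD /=.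
  by rewrite [a + _ - a]addrC addKr addrCA.
split.
  move=> a b d; rewrite [RHS]cmulE deg_cmul !cmulE raddfD /= shf_shf !addrA.
  by rewrite [deg b + _]addrC.
exists 0; split.
  by move=> a; split; rewrite cmulE ?raddf0 ?addr0 ?deg0 ?shf0 ?add0r.
move=> a; exists (- shf (- deg a) a); split.
  by rewrite cmulE raddfN /= shf_shf addNr shf0 subrr.
by rewrite cmulE degN deg_shf addNr.
Qed.

Lemma C_bstar l m : bstar cmul l m = shf (deg l) m - m.
Proof. by rewrite /bstar cmulE addKr. Qed.

Lemma C_bder3 : is_zero_set (bder cmul 3).
Proof.
move=> x; split => [Hx|->]; last by move=> H [H0 _] _.
apply: (Hx (fun z => z = 0)).
  by split => // ? ? -> ->; rewrite subrr.
move=> l m Hl _.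
have Hd : deg l = 0.
  apply: (Hl (fun z => deg z = 0)).
    by split; [rewrite deg0 | move=> ? ? Ha Hb; rewrite raddfB /= Ha Hb subrr].
  by move=> a b _ _; rewrite C_bstar raddfB /= deg_shf subrr.
by rewrite C_bstar Hd shf0 subrr.
Qed.

Lemma C_gen x : subbrace_gen cmul (c 0) x.
Proof.
move=> S [[S0 Ssub] [Sid [Smul Sinv]]] Sc0.
have SN : forall y, S y -> S (- y) by move=> y Hy; rewrite -sub0r; apply: Ssub.
have SD : forall y z, S y -> S z -> S (y + z).
  by move=> y z Hy Hz; have := Ssub _ _ Hy (SN _ Hz); rewrite opprK.
have Sci : forall i, S (c i).
  elim/int_ind2 => // i Hi.
    have := Ssub _ _ (Smul _ _ Hi Hi) Hi.
    by rewrite cmulE deg_c zliftc [c i + _]addrC addrK addrC.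
  have Hid : is_mul_identity cmul 0.
    by move=> a; split; rewrite cmulE ?raddf0 ?addr0 ?deg0 ?shf0 ?add0r.
  have := Sinv (c i) (- c (-1 + i)) 0 Hid Hi.
  rewrite cmulE deg_c raddfN /= zliftc [-1 + i]addrC subrK subrr => /(_ erefl).
  by move/SN; rewrite opprK.
by elim/C_ind: x => // y z; apply: SD.
Qed.

Definition phi := zlift (fun i : int => (2 : rat) ^ i).

Lemma phi_shf1 y : phi (shf 1 y) = phi y + phi y.
Proof.
rewrite /phi; elim/C_ind: y => [|x y Hx Hy|x Hx|i] /=.
- by rewrite !raddf0 addr0.
- by rewrite !raddfD /= Hx Hy addrACA.
- by rewrite !raddfN /= Hx opprD.
rewrite !zliftc expfzDr ?expr1z //.
by rewrite mulr_natr mulr2n.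
Qed.

Lemma phi_bstar y : phi (bstar cmul (c 0) y) = phi y.
Proof. by rewrite C_bstar deg_c /phi raddfB /= -/phi phi_shf1 addrK. Qed.

Definition xs (n : nat) : C := iter n (bstar cmul (c 0)) (c 0).

Lemma phi_xs n : phi (xs n) = 1.
Proof.
elim: n => [|n IH]; first by rewrite /xs /= /phi zliftc expr0z.
by rewrite /xs iterS -/(xs n) phi_bstar.
Qed.

Lemma bpow_xs n : bpow cmul n.+1 (xs n).
Proof.
elim: n => [|n IH] //.
move=> H _ Hg; rewrite /xs iterS -/(xs n); exact: Hg.
Qed.

Lemma C_bpow (j : nat) : (0 < j)%N -> exists x : C, bpow cmul j x /\ x <> 0.
Proof.
case: j => // n _; exists (xs n); split; first exact: bpow_xs.
move=> H0; have := phi_xs n; rewrite H0 /phi raddf0 => /eqP.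
by rewrite eq_sym oner_eq0.
Qed.

Definition lam (A : zmodType) (mul : A -> A -> A) (a y : A) : A := - a + mul a y.
Arguments lam {A} mul a y.

Section BraceA.
Context (A : zmodType) (mul : A -> A -> A) (Hb : is_left_brace mul).
Local Notation lam := (lam mul).

Lemma lamD a y z : lam a (y + z) = lam a y + lam a z.
Proof. by case: Hb => _ Hbr; rewrite /lam Hbr !addrA. Qed.

Lemma lam0r a : lam a 0 = 0.
Proof. by apply: (addrI (lam a 0)); rewrite addr0 -lamD addr0. Qed.

Lemma lamN a y : lam a (- y) = - lam a y.
Proof. by apply: (addrI (lam a y)); rewrite -lamD !subrr lam0r. Qed.

Lemma mulE a y : mul a y = a + lam a y.
Proof. by rewrite /lam addNKr. Qed.

Lemma mulr0' a : mul a 0 = a.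
Proof. by rewrite mulE lam0r addr0. Qed.

Lemma id0 e : is_mul_identity mul e -> e = 0.
Proof. by move=> He; rewrite -(mulr0' e); case: (He 0). Qed.

Lemma mulA' a b d : mul a (mul b d) = mul (mul a b) d.
Proof. by case: Hb => [[HA _] _]. Qed.

Lemma id_0 : is_mul_identity mul 0.
Proof.
case: Hb => [[_ [e [He _]]] _]; have := id0 _ He; by move=> <-.
Qed.

Lemma mul0l a : mul 0 a = a.
Proof. by case: (id_0 a). Qed.

Lemma inv_ex a : exists a', mul a a' = 0 /\ mul a' a = 0.
Proof.
case: Hb => [[_ [e [He Hi]]] _]; have E := id0 _ He; subst e; exact: Hi.
Qed.

Lemma lamM a b y : lam (mul a b) y = lam a (lam b y).
Proof.
rewrite {1}/lam -mulA' (mulE a b) (mulE a (mul b y)) (mulE b y) lamD.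
by rewrite opprD addrACA addNr add0r addKr.
Qed.

Lemma lam0l y : lam 0 y = y.
Proof. by rewrite /lam oppr0 add0r mul0l. Qed.

Lemma lam_inv a a' y : mul a a' = 0 -> lam a (lam a' y) = y.
Proof. by move=> H; rewrite -lamM H lam0l. Qed.

Lemma addE a b a' : mul a a' = 0 -> a + b = mul a (lam a' b).
Proof. by move=> H; rewrite mulE lam_inv. Qed.


Context (H3 : is_zero_set (bder mul 3)).

Lemma lamW u v z : lam (bstar mul u v) z = z.
Proof.
have : bder mul 3 (bstar mul (bstar mul u v) z).
  move=> H _ Hg; apply: Hg => //.
  by move=> H' _ Hg'; apply: Hg'.
move/(H3 _).1; move/eqP; rewrite subr_eq0; by move/eqP.
Qed.

Lemma lamAdd a b y : lam (a + b) y = lam a (lam b y).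
Proof.
have [a' [h1 h2]] := inv_ex a.
rewrite (addE _ _ _ h1) lamM; congr (lam a _).
have -> : lam a' b = bstar mul a' b + b by rewrite /bstar /lam subrK.
set w := bstar mul a' b.
have [w' [k1 k2]] := inv_ex w.
have Hw' : lam w' b = b by rewrite -{1}(lamW a' b b) -/w lam_inv.
by rewrite (addE _ _ _ k1) Hw' lamM lamW.
Qed.

Lemma lam_neg u y : lam (- u) (lam u y) = y.
Proof. by rewrite -lamAdd addNr lam0l. Qed.

Context (b : A).

Definition beta (i : int) : A := lam (b *~ i) b.
Definition alpha : C -> A := zlift beta.

Lemma lamZ i j y : lam (b *~ (i + j)) y = lam (b *~ i) (lam (b *~ j) y).
Proof. by rewrite mulrzDr lamAdd. Qed.

Lemma lam_negr u y : lam u (lam (- u) y) = y.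
Proof. by rewrite -{1}(opprK u) lam_neg. Qed.

Lemma lam_alpha x z : lam (alpha x) z = lam (b *~ deg x) z.
Proof.
rewrite /alpha; move: z; elim/C_ind: x => [|x y Hx Hy|x Hx|i] z /=.
- by rewrite !raddf0.
- by rewrite !raddfD /= !lamAdd Hx Hy.
- rewrite !raddfN /= ?mulrNz.
  by rewrite -{1}[z](lam_negr (b *~ deg x)) -Hx lam_neg.
rewrite zliftc deg_c mulr1z.
have -> : beta i = bstar mul (b *~ i) b + b by rewrite /beta /bstar /lam subrK.
by rewrite lamAdd lamW.
Qed.

Lemma lam_alpha2 v y : lam (alpha v) (alpha y) = alpha (clambda v y).
Proof.
rewrite clambda_shf lam_alpha /alpha.
elim/C_ind: y => [|x y Hx Hy|x Hx|i] /=.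
- by rewrite !raddf0 lam0r.
- by rewrite !raddfD /= lamD Hx Hy.
- by rewrite !raddfN /= lamN Hx.
by rewrite !zliftc /beta -lamZ addrC.
Qed.

Lemma alpha_mul x y : alpha (cmul x y) = mul (alpha x) (alpha y).
Proof. by rewrite mulE lam_alpha2 /alpha /cmul raddfD. Qed.

Lemma alpha_add x y : alpha (x + y) = alpha x + alpha y.
Proof. by rewrite /alpha raddfD. Qed.

Lemma alpha_c0 : alpha (c 0) = b.
Proof. by rewrite /alpha zliftc /beta mulr0z lam0l. Qed.

Lemma alpha_in x : subbrace_gen mul b (alpha x).
Proof.
move=> S [[S0 Ssub] [Sid [Smul Sinv]]] Sb.
have SN : forall y, S y -> S (- y) by move=> y Hy; rewrite -sub0r; apply: Ssub.
have SD : forall y z, S y -> S z -> S (y + z).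
  by move=> y z Hy Hz; have := Ssub _ _ Hy (SN _ Hz); rewrite opprK.
have Slam : forall u v, S u -> S v -> S (lam u v).
  by move=> u v Hu Hv; apply: SD; [apply: SN | apply: Smul].
have Sbeta : forall i, S (beta i).
  elim/int_ind2 => [|i Hi|i Hi]; first by rewrite /beta mulr0z lam0l.
    by rewrite /beta lamZ mulr1z; apply: Slam.
  by rewrite /beta lamZ mulrN1z; apply: Slam => //; apply: SN.
rewrite /alpha; elim/C_ind: x => [|x y Hx Hy|x Hx|i] /=.
- by rewrite raddf0.
- by rewrite raddfD; apply: SD.
- by rewrite raddfN; apply: SN.
by rewrite zliftc.
Qed.

Lemma alpha_onto y : subbrace_gen mul b y -> exists x, alpha x = y.
Proof.
move=> Hy; apply: (Hy (fun y => exists x, alpha x = y)); last by exists (c 0); rewrite alpha_c0.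
split; first split.
- by exists 0; rewrite /alpha raddf0.
- by move=> _ _ [x1 <-] [x2 <-]; exists (x1 - x2); rewrite /alpha raddfB.
split; first by move=> e /id0 ->; exists 0; rewrite /alpha raddf0.
split; first by move=> _ _ [x1 <-] [x2 <-]; exists (cmul x1 x2); rewrite alpha_mul.
move=> _ x' e /id0 -> [u <-] H.
exists (clambda (- u) (- u)); rewrite -lam_alpha2.
have E : lam (alpha u) x' = - alpha u.
  by apply: (addrI (alpha u)); rewrite -mulE H subrr.
by rewrite -(lam_neg (alpha u) x') E /alpha raddfN.
Qed.

Lemma alpha_unique (f : C -> A) : brace_hom cmul mul f -> f (c 0) = b ->
  forall x, f x = alpha x.
Proof.
move=> [fD fM] f0.
have fZ : f 0 = 0 by apply: (addrI (f 0)); rewrite -fD !addr0.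
have fN : forall x, f (- x) = - f x.
  by move=> x; apply: (addrI (f x)); rewrite -fD !subrr.
have fc : forall i, f (c i) = beta i.
  elim/int_ind2 => [|i Hi|i Hi]; first by rewrite f0 /beta mulr0z lam0l.
    have E := fM (c 0) (c i).
    rewrite cmulE deg_c zliftc fD f0 Hi mulE (addrC i 1) in E.
    by apply: (addrI b); rewrite E /beta lamZ mulr1z.
  have E := fM (- c 0) (c i).
  rewrite cmulE degN deg_c zliftc fD fN f0 Hi mulE (addrC i (-1)) in E.
  by apply: (addrI (- b)); rewrite E /beta lamZ mulrN1z.
rewrite /alpha; elim/C_ind => [|x y Hx Hy|x Hx|i] /=.
- by rewrite fZ raddf0.
- by rewrite fD raddfD /= Hx Hy.
- by rewrite fN raddfN /= Hx.
by rewrite fc zliftc.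
Qed.

End BraceA.

Theorem theoremC :
  [/\ is_left_brace cmul,
      is_zero_set (bder cmul 3),
      (forall x : C, subbrace_gen cmul (c 0) x),
      (forall j : nat, (0 < j)%N -> exists x : C, bpow cmul j x /\ x <> 0)
    & forall (A : zmodType) (mulA : A -> A -> A),
        is_left_brace mulA -> is_zero_set (bder mulA 3) ->
        forall b : A,
          exists alpha : C -> A,
            (brace_hom cmul mulA alpha /\
             (forall x, subbrace_gen mulA b (alpha x)) /\
             (forall y, subbrace_gen mulA b y -> exists x, alpha x = y) /\
             alpha (c 0) = b) /\
            (forall beta : C -> A,
               brace_hom cmul mulA beta /\
               (forall x, subbrace_gen mulA b (beta x)) /\
               (forall y, subbrace_gen mulA b y -> exists x, beta x = y) /\
               beta (c 0) = b ->
               forall x, beta x = alpha x)].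
Proof.
split.
- exact: C_brace.
- exact: C_bder3.
- exact: C_gen.
- exact: C_bpow.
move=> A mulA Hb H3 b; exists (alpha A mulA b); split.
  split. split. exact: alpha_add. move=> x y. exact: (@alpha_mul A mulA Hb H3 b x y).
  split; first exact: (alpha_in _ _ Hb H3 b).
  split; first exact: (alpha_onto _ _ Hb H3 b).
  exact: (alpha_c0 _ _ Hb b).
move=> f [fh [_ [_ f0]]]; exact: (alpha_unique _ _ Hb H3 _ _ fh f0).
Qed.
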